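(* Let $g:\mathbb R\to(-\infty,\infty]$ be convex. Let $T\subseteq\mathbb R$ be an open set which is a countable union of pairwise disjoint bounded open intervals $(a_k,b_k)$, $k\in\mathbb N$, and let $f:T\to(-\infty,\infty]$ be such that for each $k$ the restriction $f|_{(a_k,b_k)}$ is convex and $\lim_{t\to a_k^+}f(t)=g(a_k)$, $\lim_{t\to b_k^-}f(t)=g(b_k)$. Then the function $h:\mathbb R\to(-\infty,\infty]$ defined by $h(t)=\max\{f(t),g(t)\}$ for $t\in T$ and $h(t)=g(t)$ for $t\notin T$ is convex on $\mathbb R$. *)

(* Defs.v *)
From HB Require Import structures.
From mathcomp Require Import all_boot all_order all_algebra.
From mathcomp Require Import all_classical all_reals all_analysis.
Set Implicit Arguments. Unset Strict Implicit. Unset Printing Implicit Defensive.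
Import Order.TTheory GRing.Theory Num.Theory.
Local Open Scope classical_set_scope.
Local Open Scope ring_scope.
Local Open Scope ereal_scope.

Definition ext_convex_on (R : realType) (D : set R) (f : R -> \bar R) : Prop :=
  forall x y : R, D x -> D y -> forall l : R, (0 < l < 1)%R ->
    f (l * x + (1 - l) * y)%R <= l%:E * f x + (1 - l)%:E * f y.

Definition glue_max (R : realType) (T : set R) (f g : R -> \bar R) (t : R) : \bar R :=
  if `[< T t >] then maxe (f t) (g t) else g t.

Definition Tunion (R : realType) (K : set nat) (a b : nat -> R) : set R :=
  \bigcup_(k in K) [set` `]a k, b k[].

(* Main.v *)
Require Import Defs.
From HB Require Import structures.
From mathcomp Require Import all_boot all_order all_algebra.
From mathcomp Require Import all_classical all_reals all_analysis.
From mathcomp Require Import ring lra.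
Import Order.TTheory GRing.Theory Num.Theory.
Local Open Scope classical_set_scope.
Local Open Scope ring_scope.
Local Open Scope ereal_scope.
Lemma near_right_pt {R : realType} {f : R -> \bar R} {a z ga e d : R} :
  (a < z)%R -> (0 < e)%R -> (0 < d)%R -> f t @[t --> a^'+] --> ga%:E ->
  exists s, [/\ (a < s)%R, (s < z)%R, (s < a + d)%R & f s <= (ga + e)%:E].
Proof.
move=> az e0 d0 /fine_cvgP [Hfin Hcv].
have gae : (ga < ga + e)%R by lra.
have ad : (a < a + d)%R by lra.
have : \forall s \near a^'+, [/\ (a < s)%R, (s < z)%R, (s < a+d)%R,
   f s \is a fin_num & (fine (f s) < ga + e)%R].
  near=> s. split.
  - by near: s; exact: nbhs_right_gt.
  - by near: s; exact: nbhs_right_lt.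
  - by near: s; exact: nbhs_right_lt.
  - by near: s; exact: Hfin.
  - by near: s; exact: (cvgr_lt ga Hcv).
move=> /filter_ex [s [h1 h2 h3 h4 h5]].
exists s; split => //.
by rewrite -(fineK h4) lee_fin ltW.
Unshelve. all: by end_near.
Qed.

Lemma near_left_pt {R : realType} {f : R -> \bar R} {b z gb e d : R} :
  (z < b)%R -> (0 < e)%R -> (0 < d)%R -> f t @[t --> b^'-] --> gb%:E ->
  exists s, [/\ (z < s)%R, (s < b)%R, (b - d < s)%R & f s <= (gb + e)%:E].
Proof.
move=> az e0 d0 /fine_cvgP [Hfin Hcv].
have gae : (gb < gb + e)%R by lra.
have ad : (b - d < b)%R by lra.
have : \forall s \near b^'-, [/\ (z < s)%R, (s < b)%R, (b - d < s)%R,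
   f s \is a fin_num & (fine (f s) < gb + e)%R].
  near=> s. split.
  - by near: s; exact: nbhs_left_gt.
  - by near: s; exact: nbhs_left_lt.
  - by near: s; exact: nbhs_left_gt.
  - by near: s; exact: Hfin.
  - by near: s; exact: (cvgr_lt gb Hcv).
move=> /filter_ex [s [h1 h2 h3 h4 h5]].
exists s; split => //.
by rewrite -(fineK h4) lee_fin ltW.
Unshelve. all: by end_near.
Qed.
Lemma conv_interp {R : realType} {D : set R} {f : R -> \bar R} {s z t A B : R} :
  ext_convex_on D f -> D s -> D t -> (s < z)%R -> (z < t)%R ->
  f s <= A%:E -> f t <= B%:E ->
  exists m : R, [/\ (0 < m < 1)%R, z = (m * s + (1 - m) * t)%R &
     f z <= (m * A + (1 - m) * B)%:E].
Proof.
move=> cf Ds Dt sz zt fA fB.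
have ts : (t - s != 0)%R by rewrite subr_eq0 gt_eqF // (lt_trans sz zt).
have ts0 : (0 < t - s)%R by lra.
exists ((t - z) / (t - s))%R.
have hm : (0 < (t - z) / (t - s) < 1)%R.
  apply/andP; split; first by apply: divr_gt0; lra.
  by rewrite ltr_pdivrMr //; lra.
have hz : z = ((t - z) / (t - s) * s + (1 - (t - z) / (t - s)) * t)%R.
  by field.
split => //.
move: hm hz; set m := ((t - z) / (t - s))%R => hm hz.
rewrite {1}hz; apply: le_trans (cf s t Ds Dt _ hm) _.
apply: (@le_trans _ _ (m%:E * A%:E + (1-m)%:E * B%:E)); last first.
  by rewrite -!EFinM -EFinD.
apply: leeD.
  apply: lee_wpmul2l => //; rewrite lee_fin; case/andP: hm => h _; exact: ltW.
apply: lee_wpmul2l => //; rewrite lee_fin; case/andP: hm => _ h; lra.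
Qed.

Lemma glue_ge_g (R : realType) (T : set R) (f g : R -> \bar R) t :
  g t <= glue_max T f g t.
Proof. by rewrite /glue_max; case: asboolP => _ //; rewrite le_max lexx orbT. Qed.

Lemma glue_ge_f (R : realType) (T : set R) (f g : R -> \bar R) t :
  T t -> f t <= glue_max T f g t.
Proof. by rewrite /glue_max; case: asboolP => // _ _; rewrite le_max lexx. Qed.

Lemma chord_g {R : realType} {g : R -> \bar R} {x y X Y t : R} :
  ext_convex_on setT g -> (x < y)%R -> g x <= X%:E -> g y <= Y%:E ->
  (x <= t)%R -> (t <= y)%R ->
  g t <= (X + (t - x) * ((Y - X) / (y - x)))%:E.
Proof.
move=> cg xy gx gy xt ty.
have yx : (y - x != 0)%R by rewrite subr_eq0 gt_eqF.
case: (eqVneq t x) => [->|tx]; first by rewrite subrr mul0r addr0.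
case: (eqVneq t y) => [->|ty']; first by rewrite (_ : X + _ = Y)%R //; field.
have xt' : (x < t)%R by rewrite lt_neqAle eq_sym tx xt.
have ty2 : (t < y)%R by rewrite lt_neqAle ty' ty.
have [m [hm hz hb]] := conv_interp cg I I xt' ty2 gx gy.
apply: le_trans hb _; rewrite lee_fin le_eqVlt; apply/orP; left; apply/eqP.
by rewrite hz; field.
Qed.

Lemma core {R : realType} {g : R -> \bar R} {K : set nat}
    {a b : nat -> R} {f : R -> \bar R} {x y X Y z : R} :
  (forall t, g t != -oo) ->
  ext_convex_on setT g ->
  (forall k, K k -> ext_convex_on [set` `]a k, b k[] f) ->
  (forall k, K k -> f t @[t --> (a k)^'+] --> g (a k)) ->
  (forall k, K k -> f t @[t --> (b k)^'-] --> g (b k)) ->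
  (x < y)%R -> g x <= X%:E -> g y <= Y%:E ->
  (Tunion K a b x -> f x <= X%:E) -> (Tunion K a b y -> f y <= Y%:E) ->
  (x < z)%R -> (z < y)%R ->
  glue_max (Tunion K a b) f g z <= (X + (z - x) * ((Y - X) / (y - x)))%:E.
Proof.
move=> gninf cg cf lima limb xy gx gy fx fy xz zy.
rewrite /glue_max; case: asboolP => [[k Kk]|_]; last first.
  exact: chord_g cg xy gx gy (ltW xz) (ltW zy).
rewrite /= in_itv /= => /andP [az zb].
rewrite ge_max (chord_g cg xy gx gy (ltW xz) (ltW zy)) andbT.
set c := ((Y - X) / (y - x))%R.
have hc1 := ler_norm c; have hc2 := ler_norm (- c); rewrite normrN in hc2.
have cabs : (0 <= `|c|)%R := normr_ge0 c.
apply/lee_addgt0Pr => e e0.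
have e20 : (0 < e / 2)%R by lra.
set d := (e / 2 / (`|c| + 1))%R.
have d0 : (0 < d)%R by apply: divr_gt0; lra.
have dc : (d * (`|c| + 1) = e / 2)%R by rewrite /d; field; lra.
have [s [sab sz fs]] : exists s, [/\ (a k < s < b k)%R, (s < z)%R &
     f s <= (X + (s - x) * c + e)%:E].
  case: (ltP (a k) x) => axk.
  - exists x; split => //.
    + by apply/andP; split => //; apply: lt_trans xz zb.
    + apply: le_trans (fx _) _.
        by exists k => //=; rewrite in_itv /=; apply/andP; split => //; apply: lt_trans xz zb.
      by rewrite lee_fin subrr mul0r addr0; lra.
  - have gaL := chord_g cg xy gx gy axk (ltW (lt_trans az zy)).
    have [ga gaE] : exists ga, g (a k) = ga%:E.
      by move: gaL (gninf (a k)); case: (g (a k)) => // r _ _; exists r.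
    rewrite gaE lee_fin -/c in gaL.
    have lk := lima k Kk; rewrite gaE in lk.
    have [s [h1 h2 h3 h4]] := near_right_pt az e20 d0 lk.
    exists s; split => //.
      by apply/andP; split => //; apply: lt_trans h2 zb.
    apply: le_trans h4 _; rewrite lee_fin.
    have : (0 <= (s - a k) * (c + `|c|))%R by apply: mulr_ge0; lra.
    have : (0 <= (d - (s - a k)) * `|c|)%R by apply: mulr_ge0; lra.
    nra.
have [t [tab zt ft]] : exists t, [/\ (a k < t < b k)%R, (z < t)%R &
     f t <= (X + (t - x) * c + e)%:E].
  case: (ltP y (b k)) => ybk.
  - exists y; split => //.
    + by apply/andP; split => //; apply: lt_trans az zy.
    + apply: le_trans (fy _) _.
        by exists k => //=; rewrite in_itv /=; apply/andP; split => //; apply: lt_trans az zy.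
      have yxn : (y - x != 0)%R by rewrite subr_eq0 gt_eqF.
      rewrite lee_fin (_ : X + (y - x) * c = Y)%R; first lra.
      by rewrite /c; field.
  - have gbL := chord_g cg xy gx gy (ltW (lt_trans xz zb)) ybk.
    have [gb gbE] : exists gb, g (b k) = gb%:E.
      by move: gbL (gninf (b k)); case: (g (b k)) => // r _ _; exists r.
    rewrite gbE lee_fin -/c in gbL.
    have lk := limb k Kk; rewrite gbE in lk.
    have [t [h1 h2 h3 h4]] := near_left_pt zb e20 d0 lk.
    exists t; split => //.
      by apply/andP; split => //; apply: lt_trans az h1.
    apply: le_trans h4 _; rewrite lee_fin.
    have : (0 <= (b k - t) * (`|c| - c))%R by apply: mulr_ge0; lra.
    have : (0 <= (d - (b k - t)) * `|c|)%R by apply: mulr_ge0; lra.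
    nra.
have Ds : [set` `]a k, b k[] s by rewrite /= in_itv.
have Dt : [set` `]a k, b k[] t by rewrite /= in_itv.
have [m [hm hz hb]] := conv_interp (cf k Kk) Ds Dt sz zt fs ft.
apply: le_trans hb _; rewrite lee_fin le_eqVlt; apply/orP; left; apply/eqP.
by rewrite hz; ring.
Qed.

Theorem lemma3p5 (R : realType) (g : R -> \bar R) (K : set nat)
    (a b : nat -> R) (f : R -> \bar R) :
  (forall t, g t != -oo) ->
  ext_convex_on setT g ->
  (forall k, K k -> (a k < b k)%R) ->
  (forall i j, K i -> K j -> i <> j -> [set` `]a i, b i[] `&` [set` `]a j, b j[] = set0) ->
  (forall t, Tunion K a b t -> f t != -oo) ->
  (forall k, K k -> ext_convex_on [set` `]a k, b k[] f) ->
  (forall k, K k -> f t @[t --> (a k)^'+] --> g (a k)) ->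
  (forall k, K k -> f t @[t --> (b k)^'-] --> g (b k)) ->
  ext_convex_on setT (glue_max (Tunion K a b) f g).
Proof.
move=> gninf cg _ _ _ cf lima limb x y _ _ l hl.
set h := glue_max (Tunion K a b) f g.
have hg : forall t, g t <= h t by move=> t; exact: glue_ge_g.
have hf : forall t, Tunion K a b t -> f t <= h t by move=> t; exact: glue_ge_f.
have hninf : forall t, h t != -oo.
  move=> t; apply/negP => /eqP ht; have := hg t.
  by rewrite ht leeNy_eq (negbTE (gninf t)).
case/andP: hl => l0 l1.
have l10 : (0 < 1 - l)%R by lra.
have Hx := hninf x; have Hy := hninf y.
have Gx := hg x; have Gy := hg y.
have Fx := hf x; have Fy := hf y.
case Ehx: (h x) Hx Gx Fx => [X| |] // _ Gx Fx; last first.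
  rewrite gt0_muley ?lte_fin // addye ?leey //.
  by case: (h y) Hy => [Y| |] // _; rewrite ?gt0_muley ?lte_fin.
case Ehy: (h y) Hy Gy Fy => [Y| |] // _ Gy Fy; last first.
  by rewrite gt0_muley ?lte_fin // addey ?leey.
rewrite -!EFinM -EFinD.
case: (ltgtP x y) => xy.
- have xz : (x < l * x + (1 - l) * y)%R.
    have : (0 < (1 - l) * (y - x))%R by apply: mulr_gt0; lra.
    nra.
  have zy : (l * x + (1 - l) * y < y)%R.
    have : (0 < l * (y - x))%R by apply: mulr_gt0; lra.
    nra.
  rewrite /h; apply: le_trans (core gninf cg cf lima limb xy Gx Gy Fx Fy xz zy) _.
  have yxn : (y - x != 0)%R by rewrite subr_eq0 gt_eqF.
  rewrite lee_fin le_eqVlt; apply/orP; left; apply/eqP; by field.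
- have xz : (y < l * x + (1 - l) * y)%R.
    have : (0 < l * (x - y))%R by apply: mulr_gt0; lra.
    nra.
  have zy : (l * x + (1 - l) * y < x)%R.
    have : (0 < (1 - l) * (x - y))%R by apply: mulr_gt0; lra.
    nra.
  rewrite /h; apply: le_trans (core gninf cg cf lima limb xy Gy Gx Fy Fx xz zy) _.
  have yxn : (x - y != 0)%R by rewrite subr_eq0 gt_eqF.
  rewrite lee_fin le_eqVlt; apply/orP; left; apply/eqP; by field.
- subst y.
  rewrite (_ : l * x + (1 - l) * x = x)%R; last by ring.
  rewrite Ehx in Ehy; case: Ehy => <-.
  rewrite Ehx lee_fin le_eqVlt; apply/orP; left; apply/eqP.
  by rewrite mulrBl mul1r addrC subrK.
Qed.
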